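(* Under the standing setup, define $$Y^{1+}_{MOB}=\frac{\mathbb E[\min\{Y_N-\underline Y(1-X_N),\,\overline Y X_N\}]}{\mathbb E[X]},\qquad Y^{0-}_{MOB}=\frac{\mathbb E[\max\{Y_N-\overline Y X_N,\,\underline Y(1-X_N)\}]}{1-\mathbb E[X]},$$ $$Y^{1-}_{MOB}=\frac{\mathbb E[\max\{Y_N-\overline Y(1-X_N),\,\underline Y X_N\}]}{\mathbb E[X]},\qquad Y^{0+}_{MOB}=\frac{\mathbb E[\min\{Y_N-\underline Y X_N,\,\overline Y(1-X_N)\}]}{1-\mathbb E[X]}.$$ Then $Y^1\in[Y^{1-}_{MOB},Y^{1+}_{MOB}]$ and $Y^0\in[Y^{0-}_{MOB},Y^{0+}_{MOB}]$, and these bounds are sharp (absent additional information).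
   Context: Let $(X,Y,N)$ be a random triple with $X\in\{0,1\}$, $Y$ real-valued, $N$ taking values in a finite set $\mathcal N$. Write $p_n=\Pr(N=n)$, $X_n=\mathbb E[X\mid N=n]$, $Y_n=\mathbb E[Y\mid N=n]$, and $X_N=\mathbb E[X\mid N]$, $Y_N=\mathbb E[Y\mid N]$; expectations of functions of $(X_N,Y_N)$ are sums over $n$ weighted by $p_n$. Assume some $n$ has $p_n>0$ and $X_n\in(0,1)$. Fix reals $\underline Y\le\overline Y$ and assume $\mathbb E[Y\mid X=x,N=n]\in[\underline Y,\overline Y]$ whenever $\Pr(X=x,N=n)>0$ (standing bound). $Y^x=\mathbb E[Y\mid X=x]$. The observed data are $(p_n,X_n,Y_n)_{n\in\mathcal N}$. Sharpness: an interval is a sharp bound for a parameter if the parameter lies in it for every joint distribution satisfying the standing assumptions, and for every value $v$ in the interval there is a joint distribution of $(X,Y,N)$ with the same observed $(p_n,X_n,Y_n)_n$, satisfying the standing bound, for which the parameter equals $v$. *)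

(* Defs.v *)
From mathcomp Require Import all_boot all_order all_algebra.
Set Implicit Arguments. Unset Strict Implicit. Unset Printing Implicit Defensive.
Import Order.TTheory GRing.Theory Num.Theory.
Local Open Scope ring_scope.

Section Defs.
Variables (R : realFieldType) (T : finType).

(* (p, px) describes a legitimate law of (X, N). *)
Definition law_XN (p px : T -> R) : Prop :=
  (forall n, 0 <= p n) /\ \sum_(n : T) p n = 1 /\ (forall n, 0 <= px n <= 1).

Definition overlap (p px : T -> R) : Prop :=
  exists n, 0 < p n /\ 0 < px n < 1.

(* standing bound: E[Y|X=x,N=n] in [Ylo,Yhi] whenever Pr(X=x,N=n) > 0 *)
Definition standing_bound (Ylo Yhi : R) (p px m1 m0 : T -> R) : Prop :=
  forall n, (0 < p n * px n -> Ylo <= m1 n <= Yhi) /\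
            (0 < p n * (1 - px n) -> Ylo <= m0 n <= Yhi).

(* Y_n = E[Y | N = n] *)
Definition Ycond (px m1 m0 : T -> R) (n : T) : R :=
  px n * m1 n + (1 - px n) * m0 n.

Definition EN (p : T -> R) (f : T -> R) : R := \sum_(n : T) p n * f n.

Definition EX (p px : T -> R) : R := EN p px.

(* Y^1 = E[Y | X = 1] and Y^0 = E[Y | X = 0] *)
Definition Y1 (p px m1 : T -> R) : R :=
  (\sum_(n : T) p n * px n * m1 n) / EX p px.
Definition Y0 (p px m0 : T -> R) : R :=
  (\sum_(n : T) p n * (1 - px n) * m0 n) / (1 - EX p px).

Definition Y1plus (Ylo Yhi : R) (p px Yn : T -> R) : R :=
  EN p (fun n => Num.min (Yn n - Ylo * (1 - px n)) (Yhi * px n)) / EX p px.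
Definition Y0minus (Ylo Yhi : R) (p px Yn : T -> R) : R :=
  EN p (fun n => Num.max (Yn n - Yhi * px n) (Ylo * (1 - px n))) / (1 - EX p px).
Definition Y1minus (Ylo Yhi : R) (p px Yn : T -> R) : R :=
  EN p (fun n => Num.max (Yn n - Yhi * (1 - px n)) (Ylo * px n)) / EX p px.
Definition Y0plus (Ylo Yhi : R) (p px Yn : T -> R) : R :=
  EN p (fun n => Num.min (Yn n - Ylo * px n) (Yhi * (1 - px n))) / (1 - EX p px).

End Defs.

(* Main.v *)
Require Import Defs.
From mathcomp Require Import all_boot all_order all_algebra.
From mathcomp Require Import ring lra.
Import Order.TTheory GRing.Theory Num.Theory.
Local Open Scope ring_scope.

Lemma wbnd (R : realFieldType) (a lo hi m : R) :
  0 <= a -> (0 < a -> lo <= m <= hi) -> lo * a <= a * m <= hi * a.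
Proof.
move=> a0 h; case: (ltrgtP a 0) => ha.
- by move: a0; rewrite leNgt ha.
- have /andP [h1 h2] := h ha; apply/andP; split; nra.
- by rewrite ha !mulr0 mul0r lexx.
Qed.

Lemma part1 (R : realFieldType) (T : finType) (Ylo Yhi : R)
    (p px m1 m0 Yn : T -> R) :
  Ylo <= Yhi -> law_XN p px -> overlap p px ->
  standing_bound Ylo Yhi p px m1 m0 ->
  (forall n, Yn n = Ycond px m1 m0 n) ->
  (Y1minus Ylo Yhi p px Yn <= Y1 p px m1 <= Y1plus Ylo Yhi p px Yn) /\
  (forall v, Y1minus Ylo Yhi p px Yn <= v <= Y1plus Ylo Yhi p px Yn ->
     exists m1' m0' : T -> R,
       standing_bound Ylo Yhi p px m1' m0' /\
       (forall n, 0 < p n -> Ycond px m1' m0' n = Yn n) /\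
       Y1 p px m1' = v).
Proof.
move=> Hlh [Hp [Hs Hpx]] [n0 [Hpn0 /andP [Hx0 Hx1]]] Hsb HYn.
have EXpos : 0 < EX p px.
  rewrite /EX /EN (bigD1 n0) //=; apply: ltr_pwDl; first exact: mulr_gt0.
  by apply: sumr_ge0 => n _; apply: mulr_ge0 => //; case/andP: (Hpx n).
set L := fun n => Num.max (Yn n - Yhi * (1 - px n)) (Ylo * px n).
set U := fun n => Num.min (Yn n - Ylo * (1 - px n)) (Yhi * px n).
have Fn : forall n, 0 < p n ->
   [/\ Ylo * px n <= px n * m1 n <= Yhi * px n,
       Ylo * (1 - px n) <= (1 - px n) * m0 n <= Yhi * (1 - px n),
       0 <= px n <= 1 & Yn n = px n * m1 n + (1 - px n) * m0 n].
  move=> n pn; have /andP [a0 a1] := Hpx n; have [h1 h0] := Hsb n.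
  split.
  - apply: wbnd => // q; apply: h1; exact: mulr_gt0.
  - apply: wbnd; [lra | move=> q; apply: h0; exact: mulr_gt0].
  - by apply/andP.
  - by rewrite HYn.
have LeP : forall n, 0 < p n -> L n <= px n * m1 n <= U n.
  move=> n pn; have [/andP[b1 b2] /andP[b3 b4] /andP[b5 b6] e] := Fn n pn.
  rewrite /L /U ge_max le_min; apply/andP; split; apply/andP; split; lra.
have LU : forall n, 0 < p n -> L n <= U n.
  by move=> n pn; have /andP [h1 h2] := LeP n pn; exact: le_trans h2.
have pcase : forall n, p n = 0 \/ 0 < p n.
  by move=> n; have := Hp n; rewrite le_eqVlt => /orP [/eqP <-|]; [left|right].
have Y1e : Y1 p px m1 = (\sum_n p n * (px n * m1 n)) / EX p px.
  by rewrite /Y1; congr (_ / _); apply: eq_bigr => n _; rewrite mulrA.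
split.
  rewrite Y1e /Y1minus /Y1plus /EN; apply/andP; split;
  (apply: ler_wpM2r; [by rewrite invr_ge0 ltW|]);
  apply: ler_sum => n _; case: (pcase n) => [->|pn]; rewrite ?mul0r //;
  apply: ler_wpM2l => //; by case/andP: (LeP n pn).
move=> v /andP [hv1 hv2].
set SL := \sum_n p n * L n; set SU := \sum_n p n * U n.
have e1 : Y1minus Ylo Yhi p px Yn = SL / EX p px by [].
have e2 : Y1plus Ylo Yhi p px Yn = SU / EX p px by [].
rewrite e1 ler_pdivrMr // in hv1; rewrite e2 ler_pdivlMr // in hv2.
set s := if SU == SL then 0 else (v * EX p px - SL) / (SU - SL).
have [s0 s1] : 0 <= s /\ s <= 1.
  rewrite /s; case: eqP => [_|ne]; first by split; lra.
  have d0 : 0 < SU - SL by rewrite subr_gt0 lt_neqAle; apply/andP; split;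
    [apply/eqP => h; apply: ne; rewrite h | lra].
  by split; [apply: divr_ge0; lra | rewrite ler_pdivrMr //; lra].
set a := fun n => L n + s * (U n - L n).
have aP : forall n, 0 < p n -> L n <= a n <= U n.
  move=> n pn; have := LU n pn => h.
  have h1 : 0 <= s * (U n - L n) by apply: mulr_ge0; lra.
  have h2 : 0 <= (1 - s) * (U n - L n) by apply: mulr_ge0; lra.
  rewrite /a; apply/andP; split; nra.
have aB : forall n, 0 < p n ->
   [/\ Ylo * px n <= a n <= Yhi * px n ,
       Yn n - Yhi * (1 - px n) <= a n <= Yn n - Ylo * (1 - px n)
     & 0 <= px n <= 1].
  move=> n pn; have /andP [h1 h2] := aP n pn.
  move: h1 h2; rewrite /L /U ge_max le_min => /andP [c1 c2] /andP [c3 c4].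
  by split; apply/andP; split => //; case/andP: (Hpx n).
have Sa : \sum_n p n * a n = v * EX p px.
  have -> : \sum_n p n * a n = SL + s * (SU - SL).
    rewrite /SL /SU -sumrB mulr_sumr -big_split /=; apply: eq_bigr => n _.
    rewrite /a; ring.
  rewrite /s; case: eqP => [h|ne]; first by rewrite mul0r addr0; lra.
  rewrite divfK; [ring | by rewrite subr_eq0; apply/eqP].
exists (fun n => if px n == 0 then Ylo else a n / px n).
exists (fun n => if px n == 1 then Ylo else (Yn n - a n) / (1 - px n)).
have ppos : forall n c, 0 <= c -> 0 < p n * c -> 0 < p n /\ 0 < c.
  move=> n c c0 h; case: (pcase n) => [e|pn]; first by move: h; rewrite e mul0r ltxx.
  split => //; rewrite lt0r c0 andbT; apply/eqP => e; move: h; by rewrite e mulr0 ltxx.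
split.
  move=> n; split.
    move=> h; have /andP [x0 x1] := Hpx n; have [pn xp] := ppos n _ x0 h.
    rewrite gt_eqF //; have [/andP [c1 c2] _ _] := aB n pn.
    by rewrite ler_pdivlMr // ler_pdivrMr // c1 c2.
  move=> h; have /andP [x0 x1] := Hpx n.
  have [pn xp] := ppos n (1 - px n) ltac:(lra) h.
  have -> : (px n == 1) = false by apply/eqP => e; move: xp; rewrite e subrr ltxx.
  have [_ /andP [c1 c2] _] := aB n pn.
  rewrite ler_pdivlMr // ler_pdivrMr //; apply/andP; split; lra.
split.
  move=> n pn; have [/andP [c1 c2] /andP [c3 c4] /andP [x0 x1]] := aB n pn.
  rewrite /Ycond; case: eqP => [e0|ne0].
    rewrite e0 mul0r add0r; have -> : (0 : R) == 1 = false by rewrite eq_sym oner_eq0.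
    rewrite subr0 divr1; move: c1 c2; rewrite e0 !mulr0 => c1 c2; lra.
  case: eqP => [e1'|ne1].
    rewrite e1' subrr mul0r addr0 mul1r divr1; move: c3 c4; rewrite e1' subrr !mulr0; lra.
  rewrite mulrC divfK; last by apply/eqP.
  rewrite mulrC divfK; first ring.
  by rewrite subr_eq0 eq_sym; apply/eqP.
rewrite /Y1 -[RHS](mulfK (x := EX p px)); last by rewrite gt_eqF.
congr (_ / _); rewrite -Sa; apply: eq_bigr => n _.
case: (pcase n) => [->|pn]; first by rewrite !mul0r.
case: eqP => [e0|ne0].
  have [/andP [c1 c2] _ _] := aB n pn; move: c1 c2; rewrite e0 !mulr0 => c1 c2.
  have -> : a n = 0 by lra.
  by rewrite !mulr0 ?mul0r.
by rewrite -mulrA [px n * _]mulrC divfK //; apply/eqP.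
Qed.

Arguments part1 {R T Ylo Yhi p px m1 m0 Yn}.

Theorem proposition2 (R : realFieldType) (T : finType) (Ylo Yhi : R)
    (p px m1 m0 : T -> R) :
  Ylo <= Yhi ->
  law_XN p px ->
  overlap p px ->
  standing_bound Ylo Yhi p px m1 m0 ->
  let Yn := Ycond px m1 m0 in
  (* validity of the bounds *)
  (Y1minus Ylo Yhi p px Yn <= Y1 p px m1 <= Y1plus Ylo Yhi p px Yn /\
   Y0minus Ylo Yhi p px Yn <= Y0 p px m0 <= Y0plus Ylo Yhi p px Yn) /\
  (* sharpness for Y^1 *)
  (forall v, Y1minus Ylo Yhi p px Yn <= v <= Y1plus Ylo Yhi p px Yn ->
     exists m1' m0' : T -> R,
       standing_bound Ylo Yhi p px m1' m0' /\
       (forall n, 0 < p n -> Ycond px m1' m0' n = Yn n) /\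
       Y1 p px m1' = v) /\
  (* sharpness for Y^0 *)
  (forall v, Y0minus Ylo Yhi p px Yn <= v <= Y0plus Ylo Yhi p px Yn ->
     exists m1' m0' : T -> R,
       standing_bound Ylo Yhi p px m1' m0' /\
       (forall n, 0 < p n -> Ycond px m1' m0' n = Yn n) /\
       Y0 p px m0' = v).
Proof.
move=> Hlh Hlaw Hov Hsb Yn.
have [A1 S1] := part1 Hlh Hlaw Hov Hsb (fun n => erefl (Yn n)).
set qx := fun n => 1 - px n.
have qq : forall n, 1 - qx n = px n by move=> n; rewrite /qx; ring.
case: Hlaw => [Hp [Hs Hpx]].
have Hlaw' : law_XN p qx.
  split => //; split => // n; have /andP [a b] := Hpx n; rewrite /qx; apply/andP; split; lra.
have Hov' : overlap p qx.
  case: Hov => n [pn /andP [a b]]; exists n; split => //; rewrite /qx; apply/andP; split; lra.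
have swap : forall a b, standing_bound Ylo Yhi p px a b <-> standing_bound Ylo Yhi p qx b a.
  move=> a b; split => h n; have [h1 h2] := h n.
    by split; [exact: h2 | rewrite qq; exact: h1].
  by split; [rewrite -qq; exact: h2 | exact: h1].
have HYn : forall n, Yn n = Ycond qx m0 m1 n by move=> n; rewrite /Yn /Ycond qq /qx; ring.
have [A0 S0] := part1 Hlh Hlaw' Hov' (proj1 (swap _ _) Hsb) HYn.
have EXq : EX p qx = 1 - EX p px.
  rewrite /EX /EN -Hs -sumrB; apply: eq_bigr => n _; rewrite /qx; ring.
have Em : Y1minus Ylo Yhi p qx Yn = Y0minus Ylo Yhi p px Yn.
  by rewrite /Y1minus /Y0minus EXq; congr (_ / _); apply: eq_bigr => n _; rewrite qq.
have Ep : Y1plus Ylo Yhi p qx Yn = Y0plus Ylo Yhi p px Yn.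
  by rewrite /Y1plus /Y0plus EXq; congr (_ / _); apply: eq_bigr => n _; rewrite qq.
have EY : forall m, Y1 p qx m = Y0 p px m by move=> m; rewrite /Y1 /Y0 EXq.
rewrite Em Ep EY in A0.
split; first by split.
split; first exact: S1.
move=> v hv; rewrite -Em -Ep in hv.
have [a [b [h1 [h2 h3]]]] := S0 v hv.
exists b, a; split; first by apply/swap.
split; last by rewrite -EY.
move=> n pn; rewrite -h2 // /Ycond qq /qx; ring.
Qed.
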